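(* Let $\Lambda>2$ be real. Then the equation $(1+\rho)^{\Lambda+1}=4(1-\rho+2\rho^2)^{\Lambda-1}$ has a unique solution $\rho^{\star\star}_\Lambda$ in the interval $(0,1)$, and for $\rho\in(0,1)$ the following are equivalent: (a) $(1+\rho)^{\Lambda+1}\le4(1-\rho+2\rho^2)^{\Lambda-1}$; (b) $\rho\le\rho^{\star\star}_\Lambda$. *)

(* Defs.v *)
(* real exponents via Rpower (bases here are positive). *)
From Stdlib Require Export Reals.
Open Scope R_scope.

Definition lhs8 (L rho : R) : R := Rpower (1 + rho) (L + 1).
Definition rhs8 (L rho : R) : R := 4 * Rpower (1 - rho + 2 * rho ^ 2) (L - 1).

(* Main.v *)
Require Import Defs.
From Stdlib Require Import Reals Lra Psatz.
From Coquelicot Require Import Coquelicot.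
Open Scope R_scope.

Definition q8 (r : R) := 1 - r + 2 * r ^ 2.
Definition f8 (L r : R) := (L + 1) * ln (1 + r) - ln 4 - (L - 1) * ln (q8 r).
Definition df8 (L r : R) := (L + 1) / (1 + r) - (L - 1) * (4 * r - 1) / q8 r.
Definition g8 (L r : R) := (6 - 2 * L) * r ^ 2 + (2 - 4 * L) * r + 2 * L.

Lemma q8_pos r : 0 < q8 r.
Proof. unfold q8. nra. Qed.

Lemma exp_le_iff a b : exp a <= exp b <-> a <= b.
Proof.
  split; intro H.
  - destruct (Rle_or_lt a b) as [h|h]; auto.
    apply exp_increasing in h; lra.
  - destruct H as [h|h]; [left; now apply exp_increasing | subst; lra].
Qed.

Lemma lhs_rhs L r : 0 <= r ->
  lhs8 L r = exp ((L + 1) * ln (1 + r)) /\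
  rhs8 L r = exp ((L + 1) * ln (1 + r) - f8 L r).
Proof.
  intro hr; split; unfold lhs8, rhs8, Rpower; auto.
  unfold f8.
  replace ((L + 1) * ln (1 + r) - ((L + 1) * ln (1 + r) - ln 4 - (L - 1) * ln (q8 r)))
    with (ln 4 + (L - 1) * ln (q8 r)) by ring.
  rewrite exp_plus, exp_ln by lra. unfold q8. reflexivity.
Qed.

Lemma le_iff L r : 0 <= r -> (lhs8 L r <= rhs8 L r <-> f8 L r <= 0).
Proof.
  intro hr; destruct (lhs_rhs L r hr) as [-> ->]. rewrite exp_le_iff. lra.
Qed.

Lemma eq_iff L r : 0 <= r -> (lhs8 L r = rhs8 L r <-> f8 L r = 0).
Proof.
  intro hr; destruct (lhs_rhs L r hr) as [-> ->]. split; intro H.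
  - apply exp_inv in H. lra.
  - f_equal. lra.
Qed.

Lemma f8_deriv L r : 0 <= r -> derivable_pt_lim (f8 L) r (df8 L r).
Proof.
  intro hr. apply is_derive_Reals. unfold f8, df8.
  pose proof (q8_pos r) as hq. unfold q8 in *.
  auto_derive.
  - repeat split; lra.
  - field. lra.
Qed.

Lemma df8_eq L r : 0 <= r -> df8 L r = g8 L r / ((1 + r) * q8 r).
Proof.
  intro hr. pose proof (q8_pos r) as hq. unfold df8, g8. unfold q8 in *.
  field. lra.
Qed.

Lemma f8_0 L : f8 L 0 = - ln 4.
Proof. unfold f8, q8. replace (1+0) with 1 by ring. replace (1 - 0 + 2 * 0 ^ 2) with 1 by ring.
  rewrite ln_1. ring. Qed.

Lemma f8_1 L : f8 L 1 = 0.
Proof. unfold f8, q8. replace (1+1) with 2 by ring. replace (1 - 1 + 2 * 1 ^ 2) with 2 by ring.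
  replace 4 with (2*2) by ring. rewrite ln_mult by lra. ring. Qed.

Lemma ln4_pos : 0 < ln 4.
Proof. rewrite <- ln_1. apply ln_increasing; lra. Qed.

Theorem lemma8p3 (L : R) (hL : 2 < L) :
  exists rss : R,
    (0 < rss < 1 /\ lhs8 L rss = rhs8 L rss) /\
    (forall r : R, 0 < r < 1 -> lhs8 L r = rhs8 L r -> r = rss) /\
    (forall rho : R, 0 < rho < 1 -> (lhs8 L rho <= rhs8 L rho <-> rho <= rss)).
Proof.
  assert (gcont : continuity (fun r => - g8 L r)).
  { unfold g8. reg. }
  destruct (IVT (fun r => - g8 L r) 0 1 gcont) as [c [[hc0 hc1] hgc]].
  { lra. } { unfold g8. lra. } { unfold g8. lra. }
  assert (gsign : forall x, 0 <= x <= 1 -> g8 L x = (x - c) * ((6 - 2*L)*(x+c) + 2 - 4*L)).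
  { intros x hx. assert (g8 L c = 0) by lra. unfold g8 in *. nra. }
  assert (neg : forall x, 0 <= x <= 1 -> (6 - 2*L)*(x+c) + 2 - 4*L < 0).
  { intros x hx. nra. }
  assert (gpos : forall x, 0 <= x < c -> 0 < g8 L x).
  { intros x hx. rewrite gsign by lra. pose proof (neg x ltac:(lra)). nra. }
  assert (gneg : forall x, c < x <= 1 -> g8 L x < 0).
  { intros x hx. rewrite gsign by lra. pose proof (neg x ltac:(lra)). nra. }
  assert (dpos : forall x, 0 <= x < c -> 0 < df8 L x).
  { intros x hx. rewrite df8_eq by lra. pose proof (q8_pos x). pose proof (gpos x hx).
    apply Rdiv_lt_0_compat; nra. }
  assert (dneg : forall x, c < x <= 1 -> df8 L x < 0).
  { intros x hx. rewrite df8_eq by lra. pose proof (q8_pos x). pose proof (gneg x hx).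
    unfold Rdiv. apply Rmult_neg_pos; [lra|]. apply Rinv_0_lt_compat; nra. }
  assert (incr : forall x y, 0 <= x -> x < y -> y <= c -> f8 L x < f8 L y).
  { intros x y hx hxy hy.
    destruct (MVT_cor2 (f8 L) (df8 L) x y hxy) as [z [hz1 hz2]].
    { intros z hz. apply f8_deriv. lra. }
    pose proof (dpos z ltac:(lra)). nra. }
  assert (decr : forall x y, c <= x -> x < y -> y <= 1 -> f8 L y < f8 L x).
  { intros x y hx hxy hy.
    destruct (MVT_cor2 (f8 L) (df8 L) x y hxy) as [z [hz1 hz2]].
    { intros z hz. apply f8_deriv. lra. }
    pose proof (dneg z ltac:(lra)). nra. }
  pose proof ln4_pos.
  assert (c1 : c < 1).
  { destruct (Rlt_or_le c 1) as [h|h]; auto. assert (c = 1) by lra. subst.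
    unfold g8 in hgc. lra. }
  assert (fc : 0 < f8 L c).
  { pose proof (decr c 1 ltac:(lra) c1 ltac:(lra)). rewrite f8_1 in H0. lra. }
  assert (c0 : 0 < c).
  { destruct hc0 as [h|h]; auto. subst. rewrite f8_0 in fc. lra. }
  destruct (Ranalysis5.IVT_interv (f8 L) 0 c) as [rs [[hr0 hr1] hfr]].
  { intros a ha. apply derivable_continuous_pt. exists (df8 L a). apply f8_deriv. lra. }
  { lra. } { rewrite f8_0. lra. } { lra. }
  assert (rs0 : 0 < rs).
  { destruct hr0 as [h|h]; auto. subst. rewrite f8_0 in hfr. lra. }
  assert (rsc : rs < c).
  { destruct hr1 as [h|h]; auto. subst. lra. }
  exists rs. split; [split; [lra| apply eq_iff; lra]|split].
  - intros r hr heq. apply eq_iff in heq; [|lra].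
    destruct (Rle_or_lt r c) as [h|h].
    + destruct (Rtotal_order r rs) as [h1|[h1|h1]]; auto.
      * pose proof (incr r rs ltac:(lra) h1 ltac:(lra)). lra.
      * pose proof (incr rs r ltac:(lra) h1 h). lra.
    + pose proof (decr r 1 ltac:(lra) ltac:(lra) ltac:(lra)). rewrite f8_1 in H0. lra.
  - intros rho hr. rewrite le_iff by lra.
    destruct (Rle_or_lt rho c) as [h|h].
    + split; intro H0.
      * destruct (Rle_or_lt rho rs) as [h1|h1]; auto.
        pose proof (incr rs rho ltac:(lra) h1 h). lra.
      * destruct H0 as [h1|h1].
        -- pose proof (incr rho rs ltac:(lra) h1 ltac:(lra)). lra.
        -- subst; lra.
    + pose proof (decr rho 1 ltac:(lra) ltac:(lra) ltac:(lra)). rewrite f8_1 in H0.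
      split; intro; lra.
Qed.
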